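(* Let $X$ be a topological space and $f\colon X\to X$ a homeomorphism such that the $\mathbb Z$-action $n\cdot x=f^n(x)$ is cocompactly expansive. Then for every integer $n\neq 0$, the homeomorphism $f^n$ (i.e. the $\mathbb Z$-action $m\cdot x=f^{nm}(x)$) is cocompactly expansive.
   Context: For a family $\mathcal U$ of subsets of $X$ and $A\subseteq X$, write $A\prec\mathcal U$ if $A\subseteq U$ for some $U\in\mathcal U$. An action of a group $G$ on $X$ is cocompactly expansive if there exist a finite open cover $\mathcal U$ of $X$ and a compact set $K\subseteq X$ such that (1) $G\cdot K=X$, and (2) whenever $x,y\in X$ satisfy $\{g\cdot x,g\cdot y\}\prec\mathcal U\cup\{X\setminus K\}$ for every $g\in G$, then $x=y$. *)

(* Defs.v *)
From HB Require Import structures.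
From mathcomp Require Import all_boot all_order all_algebra.
From mathcomp Require Import all_classical all_reals topology.
Set Implicit Arguments. Unset Strict Implicit. Unset Printing Implicit Defensive.
Import Order.TTheory GRing.Theory Num.Theory.
Local Open Scope classical_set_scope.
Local Open Scope ring_scope.

Definition subordinate {X : Type} (A : set X) (U : set (set X)) : Prop :=
  exists2 V, U V & A `<=` V.

Definition cocompactly_expansive {G : Type} {X : topologicalType}
  (act : G -> X -> X) : Prop :=
  exists (U : set (set X)) (K : set X),
    [/\ finite_set U, (forall V, U V -> open V), \bigcup_(V in U) V = setT,
        compact K /\
        (forall x : X, exists g : G, exists2 k, K k & act g k = x) &
        (forall x y : X,
           (forall g : G, subordinate [set act g x; act g y] (U `|` [set ~` K])) ->
           x = y)].

Definition zpow {X : Type} (f finv : X -> X) (n : int) : X -> X :=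
  match n with
  | Posz k => iter k f
  | Negz k => iter k.+1 finv
  end.

(* Main.v *)
Require Import Defs.
From HB Require Import structures.
From mathcomp Require Import all_boot all_order all_algebra.
From mathcomp Require Import all_classical all_reals topology.
From mathcomp Require Import zify ring lra.
Import Order.TTheory GRing.Theory Num.Theory.
Local Open Scope classical_set_scope.
Local Open Scope ring_scope.

Lemma zpowS (X : Type) (f finv : X -> X) (fK : cancel f finv) (finvK : cancel finv f)
  (z : int) x : zpow f finv (1 + z) x = f (zpow f finv z x).
Proof.
case: z => [k|k].
  by have -> : 1 + Posz k = Posz k.+1 by lia.
case: k => [|k].
  by rewrite /= finvK.
have -> : (1 + Negz k.+1 = Negz k) by rewrite !NegzE; lia.
by rewrite /= finvK.
Qed.

Lemma zpowN1 (X : Type) (f finv : X -> X) (fK : cancel f finv) (finvK : cancel finv f)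
  (z : int) x : zpow f finv (-1 + z) x = finv (zpow f finv z x).
Proof.
case: z => [k|k].
  case: k => [|k]; first by [].
  have -> : (-1 + (k.+1)%:Z = k%:Z) by lia.
  by rewrite /= fK.
have -> : (-1 + Negz k = Negz k.+1) by rewrite !NegzE; lia.
by [].
Qed.

Lemma zpowD (X : Type) (f finv : X -> X) (fK : cancel f finv) (finvK : cancel finv f)
  (a b : int) x : zpow f finv (a + b) x = zpow f finv a (zpow f finv b x).
Proof.
elim/int_rec: a => [|k IH|k IH]; first by rewrite add0r.
  have -> : k.+1%:Z + b = 1 + (k%:Z + b) by lia.
  rewrite zpowS // IH.
  by have -> : k.+1%:Z = 1 + k%:Z by lia; rewrite zpowS.
have -> : - k.+1%:Z + b = -1 + (- k%:Z + b) by lia.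
rewrite zpowN1 // IH.
have -> : - k.+1%:Z = -1 + (- k%:Z) by lia.
by rewrite zpowN1.
Qed.

Lemma zpow_nat (X : Type) (f finv : X -> X) (k : nat) : zpow f finv k = iter k f.
Proof. by []. Qed.

Lemma zpow_Nnat (X : Type) (f finv : X -> X) (k : nat) x :
  zpow f finv (- k%:Z) x = iter k finv x.
Proof. by case: k. Qed.

Section Main.
Variables (X : topologicalType) (f finv : X -> X).
Hypotheses (f_cont : continuous f) (finv_cont : continuous finv)
  (fK : cancel f finv) (finvK : cancel finv f).
Variables (U : set (set X)) (K : set X).

Fixpoint Uc (k : nat) : set (set X) :=
  match k with 0 => U | k.+1 => [set V `&` f @^-1` W | V in U & W in Uc k] end.

Fixpoint Kc (k : nat) : set X :=
  match k with 0 => K | k.+1 => K `|` finv @` Kc k end.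

Lemma Uc_fin k : finite_set U -> finite_set (Uc k).
Proof. move=> fU; elim: k => [|k IH] //=; exact: finite_image2. Qed.

Lemma Uc_open k : (forall V, U V -> open V) -> forall W, Uc k W -> open W.
Proof.
move=> oU; elim: k => [|k IH] //= W [V UV [W' UW' <-]].
apply: openI; first exact: oU.
by apply/(continuousP f).1 => //; apply: IH.
Qed.

Lemma Uc_cover k : (forall x, exists2 V, U V & V x) ->
  forall x, exists2 W, Uc k W & W x.
Proof.
move=> cU; elim: k => [|k IH] //= x.
have [V UV Vx] := cU x; have [W UW Wx] := IH (f x).
by exists (V `&` f @^-1` W) => //; exists V => //; exists W.
Qed.

Lemma Uc_sub k W : Uc k W -> forall i, (i <= k)%N ->
  exists2 V, U V & forall a, W a -> V (iter i f a).
Proof.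
elim: k W => [|k IH] W /=.
  by move=> UW [|i] // _; exists W.
move=> [V UV [W' UW' <-]] [|i] Hi; first by exists V => // a [].
have [V' UV' HV'] := IH W' UW' i Hi.
by exists V' => // a [_ Wa]; rewrite iterSr; apply: HV'.
Qed.

Lemma Kc_compact k : compact K -> compact (Kc k).
Proof.
move=> cK; elim: k => [|k IH] //=.
apply: compactU => //; apply: continuous_compact => //.
exact: continuous_subspaceT.
Qed.

Lemma Kc_out k a : ~ Kc k a -> forall i, (i <= k)%N -> ~ K (iter i f a).
Proof.
elim: k a => [|k IH] a /=.
  by move=> Ha [|i].
move=> Ha [|i] Hi; first by move=> Ka; apply: Ha; left.
rewrite iterSr; apply: IH => // Hf; apply: Ha; right.
by exists (f a) => //; rewrite fK.
Qed.

Lemma Kc_in k z : K z -> forall j, (j <= k)%N -> Kc k (iter j finv z).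
Proof.
move=> Kz; elim: k => [|k IH] [|j] Hj //=; first by left.
by right; exists (iter j finv z) => //; apply: IH.
Qed.

End Main.
Arguments Uc_sub {X f U k W}.
Arguments Kc_out {X f finv} fK {K k a}.

Theorem mainTheorem3 (X : topologicalType) (f finv : X -> X)
  (f_cont : continuous f) (finv_cont : continuous finv)
  (fK : cancel f finv) (finvK : cancel finv f) :
  cocompactly_expansive (fun m : int => zpow f finv m) ->
  forall n : int, n != 0 ->
  cocompactly_expansive (fun m : int => zpow f finv (n * m)).
Proof.
move=> [U [K [fU oU cU [cK HK] HE]]] n n0.
set k := (`|n|.-1)%N.
have kN : (`|n| = k.+1)%N by rewrite /k prednK // absz_gt0.
have cU' : forall x, exists2 V, U V & V x.
  move=> x; have : (\bigcup_(V in U) V) x by rewrite cU.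
  by move=> [V UV Vx]; exists V.
exists (Uc X f U k), (Kc X finv K k); split.
- exact: Uc_fin.
- exact: Uc_open.
- apply/seteqP; split => // x _.
  by have [W UW Wx] := @Uc_cover X f U k cU' x; exists W.
- split; first exact: Kc_compact.
  move=> x; have [g [z Kz <-]] := HK x.
  set q := ((- g) %/ n)%Z; set r := ((- g) %% n)%Z.
  have r0 : 0 <= r by apply: modz_ge0.
  have rn : r < `|n|%:Z by rewrite abszE; apply: ltz_mod.
  have [j rj] : exists j : nat, r = j%:Z by exists `|r|%N; rewrite gez0_abs.
  have gE : g = n * (- q) + (- j%:Z).
    by rewrite -rj; have := divz_eq (- g) n; rewrite -/q -/r; lia.
  exists (- q), (iter j finv z).
    by apply: Kc_in => //; rewrite -ltnS -kN; rewrite rj in rn; lia.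
  by rewrite gE zpowD // zpow_Nnat.
- move=> x y H; apply: HE => g.
  set q := (g %/ n)%Z; set r := (g %% n)%Z.
  have r0 : 0 <= r by apply: modz_ge0.
  have rn : r < `|n|%:Z by rewrite abszE; apply: ltz_mod.
  have [i ri] : exists i : nat, r = i%:Z by exists `|r|%N; rewrite gez0_abs.
  have ik : (i <= k)%N by rewrite -ltnS -kN; rewrite ri in rn; lia.
  have gE : g = i%:Z + n * q.
    by rewrite -ri; have := divz_eq g n; rewrite -/q -/r; lia.
  rewrite gE !zpowD // !zpow_nat.
  have [W [UW|->] HW] := H q.
    have [V UV HV] := Uc_sub UW i ik.
    exists V; first by left.
    by move=> z [->|->]; apply: HV; apply: HW; [left|right].
  exists (~` K); first by right.
  move=> z [->|->]; apply: (Kc_out fK _ i ik) => Hk.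
    by apply: (HW (zpow f finv (n * q) x)) Hk; left.
  by apply: (HW (zpow f finv (n * q) y)) Hk; right.
Qed.
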